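(* Let $\mathbb{A}_f$ be the ring of finite adeles of $\mathbf{Q}$, $\widehat{\mathbf{Z}}=\prod_p\mathbf{Z}_p$, and regard $\mathbb{A}_f$ as a commutative monoid under multiplication. The multiplication descends to the double quotient $\mathbf{Q}^\times\backslash\mathbb{A}_f/\widehat{\mathbf{Z}}^\times$. Let $\operatorname{Pic}(\operatorname{Spec}\mathbf{Z})$ be the set of arithmetic divisors $\sum_p n_p[p]$ (with $n_p\in\mathbf{Z}\cup\{+\infty\}$, $n_p<0$ for finitely many $p$) modulo linear equivalence ($D\sim D'$ iff $D=D'-\sum_p v_p(q)[p]$ for some $q\in\mathbf{Q}^\times$), with the monoid structure induced by coefficientwise addition (convention $\infty+k=\infty$). Then the map \[ \Phi:\mathbf{Q}^\times\backslash\mathbb{A}_f/\widehat{\mathbf{Z}}^\times\longrightarrow \operatorname{Pic}(\operatorname{Spec}\mathbf{Z}),\qquad [(a_p)_p]\longmapsto \Big[\sum_p v_p(a_p)[p]\Big] \] (with $v_p(0)=\infty$) is an isomorphism of commutative monoids: it is bijective and sends multiplication of finite adeles to addition of divisors. *)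

(* Defs.v *)
From mathcomp Require Import all_boot all_order all_algebra.
From Stdlib Require Import ClassicalEpsilon.
Set Implicit Arguments. Unset Strict Implicit. Unset Printing Implicit Defensive.
Import Order.TTheory GRing.Theory Num.Theory.

(* A p-adic integer is a compatible family x n \in Z/p^n Z (represented
   by its residue in [0, p^n)). *)
Definition zp_raw := nat -> nat.

Definition is_zp (p : nat) (x : zp_raw) : Prop :=
  (forall n, x n < p ^ n) /\ (forall n, x n.+1 %% p ^ n = x n).

Definition zp_eq (x y : zp_raw) : Prop := forall n, x n = y n.

Definition zp_mul (p : nat) (x y : zp_raw) : zp_raw :=
  fun n => (x n * y n) %% p ^ n.

Definition zp_of_int (p : nat) (m : int) : zp_raw :=
  fun n => `|(m %% (p ^ n)%:Z)%Z|%N.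

Definition zp_one (p : nat) : zp_raw := zp_of_int p 1.

Inductive zinf := Fin of int | Inf.

Definition zinf_add (a b : zinf) : zinf :=
  match a, b with Fin x, Fin y => Fin (x + y)%R | _, _ => Inf end.

(* p-adic valuation on Z_p: sup {n | p^n divides x} = sup {n | x n = 0},
   i.e. the least n with x (n+1) <> 0, and +oo for x = 0. *)
Definition vzp (x : zp_raw) : zinf :=
  match excluded_middle_informative (exists n, x n.+1 != 0) with
  | left H => Fin (ex_minn H)%:Z
  | right _ => Inf
  end.

(* (x, k) represents p^(-k) * x, with x in Z_p. *)
Definition qp_raw := (zp_raw * nat)%type.

Definition is_qp (p : nat) (a : qp_raw) : Prop := is_zp p a.1.

Definition qp_eq (p : nat) (a b : qp_raw) : Prop :=
  zp_eq (zp_mul p a.1 (zp_of_int p (p ^ b.2)%:Z))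
        (zp_mul p b.1 (zp_of_int p (p ^ a.2)%:Z)).

Definition qp_mul (p : nat) (a b : qp_raw) : qp_raw :=
  (zp_mul p a.1 b.1, a.2 + b.2).

Definition qp_of_zp (x : zp_raw) : qp_raw := (x, 0).

Definition qp_in_zp (p : nat) (a : qp_raw) : Prop :=
  exists y, is_zp p y /\ qp_eq p (qp_of_zp y) a.

Definition vqp (a : qp_raw) : zinf :=
  zinf_add (vzp a.1) (Fin (- (a.2)%:Z)%R).

(* a p is the p-component (only primes p matter). *)
Definition adele_raw := nat -> qp_raw.

Definition is_adele (a : adele_raw) : Prop :=
  (forall p, prime p -> is_qp p (a p)) /\
  (exists N, forall p, prime p -> N <= p -> qp_in_zp p (a p)).

Definition adele_mul (a b : adele_raw) : adele_raw :=
  fun p => qp_mul p (a p) (b p).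

Definition adele_one : adele_raw := fun p => qp_of_zp (zp_one p).

Definition adele_of_int (m : int) : adele_raw :=
  fun p => qp_of_zp (zp_of_int p m).

Definition adele_eq (a b : adele_raw) : Prop :=
  forall p, prime p -> qp_eq p (a p) (b p).

Definition zhat_unit (u : nat -> zp_raw) : Prop :=
  (forall p, prime p -> is_zp p (u p)) /\
  exists w : nat -> zp_raw,
    (forall p, prime p -> is_zp p (w p)) /\
    (forall p, prime p -> zp_eq (zp_mul p (u p) (w p)) (zp_one p)).

(* a and b define the same class in Q^x \ A_f / Zhat^x:
   b = q * a * u with q = m/n in Q^x and u in Zhat^x,
   written (to avoid dividing) as n * b = m * a * u. *)
Definition adele_rel (a b : adele_raw) : Prop :=
  exists (m n : int) (u : nat -> zp_raw),
    m != 0%R /\ n != 0%R /\ zhat_unit u /\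
    adele_eq (adele_mul (adele_of_int n) b)
             (adele_mul (adele_mul (adele_of_int m) a)
                        (fun p => qp_of_zp (u p))).

(* D p is the coefficient n_p of [p] (only primes p matter). *)
Definition divisor := nat -> zinf.

Definition zinf_neg (a : zinf) : bool :=
  if a is Fin x then (x < 0)%R else false.

Definition is_divisor (D : divisor) : Prop :=
  exists N, forall p, prime p -> N <= p -> ~~ zinf_neg (D p).

Definition vrat (p : nat) (q : rat) : int :=
  ((logn p `|numq q|%N)%:Z - (logn p `|denq q|%N)%:Z)%R.

Definition lin_equiv (D D' : divisor) : Prop :=
  exists q : rat, q != 0%R /\
    forall p, prime p -> D p = zinf_add (D' p) (Fin (- vrat p q)%R).

Definition divisor_eq (D D' : divisor) : Prop :=
  forall p, prime p -> D p = D' p.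

Definition divisor_add (D D' : divisor) : divisor :=
  fun p => zinf_add (D p) (D' p).

Definition divisor_zero : divisor := fun _ => Fin 0.

Definition Phi (a : adele_raw) : divisor := fun p => vqp (a p).

(* Main.v *)
Require Import Defs.
From mathcomp Require Import all_boot all_order all_algebra.
From mathcomp Require Import zify ring lra cyclic.
From Stdlib Require Import FunctionalExtensionality ClassicalEpsilon.
Unset Printing Implicit Defensive.
Import Order.TTheory GRing.Theory Num.Theory.
Lemma pgt1 p : prime p -> 1 < p. Proof. exact: prime_gt1. Qed.
Lemma pgt0 p : prime p -> 0 < p. Proof. exact: prime_gt0. Qed.
Lemma pn_gt0 p n : prime p -> 0 < p ^ n. Proof. by move=> pp; rewrite expn_gt0 pgt0. Qed.

Lemma modz_dvdm' (m d1 d2 : int) : dvdz d2 d1 -> modz (modz m d1) d2 = modz m d2.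
Proof.
move=> /dvdzP [c ->].
have H := divz_eq m (c * d2)%R.
by rewrite [in RHS]H mulrA modzMDl.
Qed.

Lemma zp_of_intE p m n : prime p -> Posz (zp_of_int p m n) = modz m (p ^ n)%N.
Proof.
move=> pp; rewrite /zp_of_int gez0_abs // modz_ge0 //.
by rewrite eqz_nat -lt0n pn_gt0.
Qed.

Lemma is_zp_of_int p m : prime p -> is_zp p (zp_of_int p m).
Proof.
move=> pp; split=> n.
  rewrite -ltz_nat zp_of_intE // ltz_pmod // ltz_nat pn_gt0 //.
apply/eqP; rewrite -eqz_nat -modz_nat !zp_of_intE // modz_dvdm' //.
by rewrite /dvdz /= dvdn_exp2l.
Qed.

Lemma zp_of_natE p (k : nat) n : prime p -> zp_of_int p k n = k %% p ^ n.
Proof. by move=> pp; apply/eqP; rewrite -eqz_nat zp_of_intE // modz_nat. Qed.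

Lemma zp_oneE p n : prime p -> zp_one p n = 1 %% p ^ n.
Proof. by move=> pp; rewrite /zp_one zp_of_natE. Qed.

Lemma zp_mod p x n N : is_zp p x -> n <= N -> x N %% p ^ n = x n.
Proof.
move=> [xlt xc]; elim: N => [|N IH]; first by rewrite leqn0 => /eqP ->; rewrite modn_small.
rewrite leq_eqVlt => /orP [/eqP -> | ]; first by rewrite modn_small.
rewrite ltnS => le; rewrite -(IH le) -(xc N) modn_dvdm //.
by rewrite dvdn_exp2l.
Qed.

Lemma zp_mul_is p x y : prime p -> is_zp p x -> is_zp p y -> is_zp p (zp_mul p x y).
Proof.
move=> pp hx hy; split=> n; rewrite /zp_mul.
  by rewrite ltn_pmod // pn_gt0.
rewrite modn_dvdm ?dvdn_exp2l //.
by rewrite -modnMm !(zp_mod _ _ _ _ hx) ?(zp_mod _ _ _ _ hy) // modnMm.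
Qed.

Lemma zp_mulC p x y : zp_mul p x y = zp_mul p y x.
Proof. by apply: functional_extensionality => n; rewrite /zp_mul mulnC. Qed.

Lemma zp_mulA p x y z : zp_mul p x (zp_mul p y z) = zp_mul p (zp_mul p x y) z.
Proof.
apply: functional_extensionality => n; rewrite /zp_mul.
by rewrite modnMmr modnMml mulnA.
Qed.

Lemma zp_mulCA p x y z : zp_mul p x (zp_mul p y z) = zp_mul p y (zp_mul p x z).
Proof. by rewrite zp_mulA (zp_mulC p x y) -zp_mulA. Qed.

Lemma zp_mulACA p x y z t :
  zp_mul p (zp_mul p x y) (zp_mul p z t) = zp_mul p (zp_mul p x z) (zp_mul p y t).
Proof. by rewrite -!zp_mulA (zp_mulCA p y z). Qed.

Lemma zp_mul1 p x : prime p -> is_zp p x -> zp_mul p x (zp_one p) = x.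
Proof.
move=> pp hx; apply: functional_extensionality => n; rewrite /zp_mul zp_oneE //.
by rewrite modnMmr muln1 modn_small //; case: hx.
Qed.

Lemma zp_is_one p : prime p -> is_zp p (zp_one p).
Proof. by move=> pp; apply: is_zp_of_int. Qed.

Lemma zp_of_intM p m m' : prime p ->
  zp_of_int p (m * m')%R = zp_mul p (zp_of_int p m) (zp_of_int p m').
Proof.
move=> pp; apply: functional_extensionality => n; rewrite /zp_mul.
apply/eqP; rewrite -eqz_nat -modz_nat PoszM !zp_of_intE //.
by rewrite modzMm.
Qed.

Definition pk p k := zp_of_int p (p ^ k)%N.

Lemma pkE p k n : prime p -> pk p k n = p ^ k %% p ^ n.
Proof. by move=> pp; rewrite /pk zp_of_natE. Qed.

Lemma pk0 p : pk p 0 = zp_one p.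
Proof. by []. Qed.

Lemma pkD p a b : prime p -> pk p (a + b) = zp_mul p (pk p a) (pk p b).
Proof. by move=> pp; rewrite /pk expnD PoszM zp_of_intM. Qed.

Lemma is_pk p k : prime p -> is_zp p (pk p k).
Proof. by move=> pp; apply: is_zp_of_int. Qed.

Lemma vzp_fin p x k : prime p -> is_zp p x -> x k = 0 -> x k.+1 != 0 -> vzp x = Fin k.
Proof.
move=> pp hx xk xk1; rewrite /vzp.
case: excluded_middle_informative => [H|H]; last by case: H; exists k.
congr (Fin (Posz _)).
case: ex_minnP => m hm hmin.
apply/eqP; rewrite eqn_leq hmin //= leqNgt; apply/negP => mk.
by move: hm; rewrite -(zp_mod _ _ _ _ hx mk) xk mod0n.
Qed.

Lemma vzp_inf x : (forall n, x n = 0) -> vzp x = Inf.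
Proof.
move=> H; rewrite /vzp; case: excluded_middle_informative => // H'.
by exfalso; case: H' => n; rewrite H.
Qed.

Lemma zp_x0 p x : is_zp p x -> x 0 = 0.
Proof. by case=> /(_ 0); rewrite expn0; case: (x 0). Qed.

Lemma vzp_cases p x : is_zp p x ->
  (forall n, x n = 0) \/ exists k, x k = 0 /\ x k.+1 != 0.
Proof.
move=> hx.
case: (classic (exists n, x n != 0)) => [H|H]; last first.
  left=> n; apply/eqP; apply: contra_notT H => h; by exists n.
right; case: (ex_minnP H) => m hm hmin.
case: m hm hmin => [|k] hm hmin; first by rewrite (zp_x0 _ _ hx) in hm.
exists k; split=> //.
apply/eqP; apply: contraT => h; have := hmin _ h; by rewrite ltnn.
Qed.

Lemma vzp_inf_inv p x : prime p -> is_zp p x -> vzp x = Inf -> forall n, x n = 0.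
Proof.
move=> pp hx; case: (vzp_cases _ _ hx) => // [[k [h1 h2]]].
by rewrite (vzp_fin p x k).
Qed.

Lemma zp_eq0_dvd p x n N : is_zp p x -> n <= N -> (x n == 0) = (p ^ n %| x N).
Proof. by move=> hx le; rewrite -(zp_mod _ _ _ _ hx le). Qed.

Lemma val_logn p x k N : prime p -> is_zp p x -> x k = 0 -> x k.+1 != 0 -> k < N ->
  0 < x N /\ logn p (x N) = k.
Proof.
move=> pp hx xk xk1 kN.
have xN : 0 < x N.
  rewrite lt0n; apply: contra xk1 => /eqP h.
  by rewrite (zp_eq0_dvd _ _ _ N hx kN) h dvdn0.
split=> //; apply/eqP; rewrite eqn_leq -ltnS.
rewrite -(pfactor_dvdn _ pp xN) -(zp_eq0_dvd _ _ _ N hx) ?(ltnW kN) ?xk ?eqxx ?andbT //.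
rewrite ltnNge -(pfactor_dvdn _ pp xN) -(zp_eq0_dvd _ _ _ N hx kN) //.
Qed.

Lemma zp_mul0l p x y : (forall n, x n = 0) -> forall n, zp_mul p x y n = 0.
Proof. by move=> H n; rewrite /zp_mul H mul0n mod0n. Qed.

Lemma vzp_mul p x y : prime p -> is_zp p x -> is_zp p y ->
  vzp (zp_mul p x y) = zinf_add (vzp x) (vzp y).
Proof.
move=> pp hx hy.
case: (vzp_cases _ _ hx) => [x0|[i [xi xi1]]].
  by rewrite (vzp_inf x) // (vzp_inf (zp_mul p x y)) //; apply: zp_mul0l.
case: (vzp_cases _ _ hy) => [y0|[j [yj yj1]]].
  rewrite (vzp_inf y) // (vzp_inf (zp_mul p x y)); first by case: (vzp x).
  by rewrite zp_mulC; apply: zp_mul0l.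
have hz := zp_mul_is _ _ _ pp hx hy.
rewrite (vzp_fin p x i) // (vzp_fin p y j) //.
have [xN lx] := val_logn p x i (i + j).+1 pp hx xi xi1 ltac:(lia).
have [yN ly] := val_logn p y j (i + j).+1 pp hy yj yj1 ltac:(lia).
have xyN : 0 < x (i + j).+1 * y (i + j).+1 by rewrite muln_gt0 xN.
have lxy : logn p (x (i + j).+1 * y (i + j).+1) = i + j by rewrite lognM // lx ly.
rewrite (vzp_fin p _ (i + j)) //=.
  apply/eqP; rewrite (zp_eq0_dvd _ _ _ (i + j).+1 hz) // /zp_mul.
  rewrite /dvdn modn_dvdm ?dvdn_exp2l // -/(dvdn _ _).
  by rewrite pfactor_dvdn // lxy.
rewrite /zp_mul -/(dvdn _ _) pfactor_dvdn // lxy.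
by rewrite ltnn.
Qed.

Lemma zp_of_int_eq0 p m n : prime p -> (zp_of_int p m n == 0) = (p ^ n %| `|m|%N).
Proof.
move=> pp; rewrite -eqz_nat zp_of_intE //.
apply/eqP/idP => [/dvdz_mod0P // | h]; apply/dvdz_mod0P; exact: h.
Qed.

Lemma vzp_of_int p m : prime p -> m != 0%R -> vzp (zp_of_int p m) = Fin (logn p `|m|%N).
Proof.
move=> pp m0; have m0' : 0 < `|m|%N by rewrite absz_gt0.
apply: (vzp_fin p) => //; first exact: is_zp_of_int.
  by apply/eqP; rewrite zp_of_int_eq0 // pfactor_dvdnn.
by rewrite zp_of_int_eq0 // pfactor_dvdn // ltnn.
Qed.

Lemma vzp_pk p k : prime p -> vzp (pk p k) = Fin k.
Proof.
move=> pp; rewrite /pk vzp_of_int //=; first by rewrite pfactorK.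
by rewrite eqz_nat -lt0n pn_gt0.
Qed.

Lemma vzp_one p : prime p -> vzp (zp_one p) = Fin 0.
Proof. by move=> pp; rewrite -pk0 vzp_pk. Qed.

Lemma vrat_div p (m n : int) : m != 0%R -> n != 0%R ->
  vrat p ((m%:~R / n%:~R)%R : rat) = ((logn p `|m|%N)%:Z - (logn p `|n|%N)%:Z)%R.
Proof.
move=> m0 n0; set q : rat := (m%:~R / n%:~R)%R.
have q0 : q != 0%R by rewrite /q mulf_neq0 ?invr_eq0 ?intr_eq0.
have E : (numq q * n = m * denq q)%R.
  have h := divq_num_den q; rewrite {2}/q in h.
  move/eqP: h; rewrite eqr_div ?intr_eq0 ?denq_neq0 // -!intrM.
  by move/eqP/intr_inj.
have E' : (`|numq q| * `|n| = `|m| * `|denq q|)%N by rewrite -!abszM E.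
have h1 : 0 < `|numq q|%N by rewrite absz_gt0 numq_eq0.
have h2 : 0 < `|denq q|%N by rewrite absz_gt0 denq_neq0.
have h3 : 0 < `|m|%N by rewrite absz_gt0.
have h4 : 0 < `|n|%N by rewrite absz_gt0.
have L : (logn p `|numq q| + logn p `|n| = logn p `|m| + logn p `|denq q|)%N.
  by rewrite -!lognM // E'.
rewrite /vrat; lia.
Qed.

Lemma qp_eqE p a b : qp_eq p a b <-> zp_mul p a.1 (pk p b.2) = zp_mul p b.1 (pk p a.2).
Proof.
split; first by move=> h; apply: functional_extensionality; exact: h.
by move=> h n; rewrite /pk h.
Qed.

Lemma qp_eq_mul p a b c d : prime p ->
  qp_eq p a b -> qp_eq p c d -> qp_eq p (qp_mul p a c) (qp_mul p b d).
Proof.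
move=> pp /qp_eqE h1 /qp_eqE h2; apply/qp_eqE => /=.
by rewrite !pkD // zp_mulACA h1 h2 zp_mulACA.
Qed.

Lemma qp_mulACA p x y z t :
  qp_mul p (qp_mul p x y) (qp_mul p z t) = qp_mul p (qp_mul p x z) (qp_mul p y t).
Proof. by rewrite /qp_mul /= zp_mulACA addnACA. Qed.

Lemma adele_of_intM (m n : int) p : prime p ->
  adele_of_int (m * n)%R p = qp_mul p (adele_of_int m p) (adele_of_int n p).
Proof. by move=> pp; rewrite /adele_of_int /qp_mul /qp_of_zp /= zp_of_intM. Qed.

Lemma vzp_nat x : vzp x = Inf \/ exists k : nat, vzp x = Fin k.
Proof.
rewrite /vzp; case: excluded_middle_informative => H; last by left.
by right; eexists.
Qed.

Lemma unit_v0 p u w : prime p -> is_zp p u -> is_zp p w ->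
  zp_mul p u w = zp_one p -> vzp u = Fin 0.
Proof.
move=> pp hu hw e; have := vzp_mul _ _ _ pp hu hw; rewrite e vzp_one //.
case: (vzp_nat u) => [->|[k ->]] //.
case: (vzp_nat w) => [->|[k' ->]] //= [].
by case: k => // k; rewrite -PoszD.
Qed.

Lemma partA a b : is_adele a -> is_adele b -> is_adele (adele_mul a b).
Proof.
move=> [ha [Na hNa]] [hb [Nb hNb]]; split.
  by move=> p pp; apply: zp_mul_is => //; [exact: ha | exact: hb].
exists (maxn Na Nb) => p pp le.
have [y1 [hy1 e1]] := hNa p pp (leq_trans (leq_maxl _ _) le).
have [y2 [hy2 e2]] := hNb p pp (leq_trans (leq_maxr _ _) le).
exists (zp_mul p y1 y2); split; first exact: zp_mul_is.
exact: (qp_eq_mul _ _ _ _ _ pp e1 e2).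
Qed.

Lemma zhat_unit_mul u1 u2 : zhat_unit u1 -> zhat_unit u2 ->
  zhat_unit (fun p => zp_mul p (u1 p) (u2 p)).
Proof.
move=> [hu1 [w1 [hw1 e1]]] [hu2 [w2 [hw2 e2]]]; split.
  by move=> p pp; apply: zp_mul_is; auto.
exists (fun p => zp_mul p (w1 p) (w2 p)); split.
  by move=> p pp; apply: zp_mul_is; auto.
move=> p pp n; rewrite zp_mulACA.
have -> : zp_mul p (u1 p) (w1 p) = zp_one p by apply: functional_extensionality; apply: e1.
have -> : zp_mul p (u2 p) (w2 p) = zp_one p by apply: functional_extensionality; apply: e2.
by rewrite zp_mul1 //; apply: zp_is_one.
Qed.

Lemma partB a a' b b' : adele_rel a a' -> adele_rel b b' ->
  adele_rel (adele_mul a b) (adele_mul a' b').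
Proof.
move=> [m1 [n1 [u1 [m10 [n10 [hu1 e1]]]]]] [m2 [n2 [u2 [m20 [n20 [hu2 e2]]]]]].
exists (m1 * m2)%R, (n1 * n2)%R, (fun p => zp_mul p (u1 p) (u2 p)).
split; first by rewrite mulf_neq0.
split; first by rewrite mulf_neq0.
split; first exact: zhat_unit_mul.
move=> p pp.
have H := qp_eq_mul _ _ _ _ _ pp (e1 p pp) (e2 p pp).
rewrite /adele_mul in H *.
rewrite !adele_of_intM // qp_mulACA.
rewrite -[qp_of_zp (zp_mul p (u1 p) (u2 p))]/(qp_mul p (qp_of_zp (u1 p)) (qp_of_zp (u2 p))).
rewrite (qp_mulACA p (qp_mul p (adele_of_int m1 p) (a p))) in H.
by rewrite (qp_mulACA p (adele_of_int m1 p)) in H.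
Qed.

Ltac zpa := repeat first [assumption | apply: zp_mul_is | apply: is_zp_of_int | apply: is_pk | apply: zp_is_one].

Lemma partC a : is_adele a -> is_divisor (Phi a).
Proof.
move=> [ha [N hN]]; exists N => p pp le.
have [y [hy /qp_eqE /= e]] := hN p pp le.
have hx : is_zp p (a p).1 := ha p pp.
rewrite pk0 zp_mul1 // in e.
rewrite /Phi /vqp -e vzp_mul ?vzp_pk; try by zpa.
case: (vzp_nat y) => [->|[k ->]] //=.
rewrite -PoszD; lia.
Qed.

Lemma partG : divisor_eq (Phi adele_one) divisor_zero.
Proof. by move=> p pp; rewrite /Phi /adele_one /vqp /= vzp_one. Qed.

Lemma partH a b : is_adele a -> is_adele b ->
  divisor_eq (Phi (adele_mul a b)) (divisor_add (Phi a) (Phi b)).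
Proof.
move=> [ha _] [hb _] p pp.
have hx : is_zp p (a p).1 := ha p pp.
have hy : is_zp p (b p).1 := hb p pp.
rewrite /Phi /divisor_add /adele_mul /vqp /= vzp_mul //.
case: (vzp (a p).1) => [X|]; case: (vzp (b p).1) => [Y|] //=.
congr Fin; lia.
Qed.

Lemma partD a b : is_adele a -> is_adele b -> adele_rel a b -> lin_equiv (Phi a) (Phi b).
Proof.
move=> [ha _] [hb _] [m [n [u [m0 [n0 [[hu [w [hw ew]]] e]]]]]].
exists ((m%:~R / n%:~R)%R : rat); split.
  by rewrite mulf_neq0 ?invr_eq0 ?intr_eq0.
move=> p pp; rewrite vrat_div //.
have hx : is_zp p (a p).1 := ha p pp.
have hy : is_zp p (b p).1 := hb p pp.
have hup : is_zp p (u p) := hu p pp.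
have hwp : is_zp p (w p) := hw p pp.
have u0 : vzp (u p) = Fin 0.
  apply: (unit_v0 p (u p) (w p)) => //.
  by apply: functional_extensionality; apply: ew.
have /qp_eqE /= E := e p pp.
have V := congr1 vzp E.
rewrite !vzp_mul in V; try by zpa.
rewrite !vzp_pk // !vzp_of_int // u0 in V.
rewrite /Phi /vqp.
move: V; case: (vzp (a p).1) => [X|]; case: (vzp (b p).1) => [Y|] //=.
move=> [] V; congr Fin; lia.
Qed.

Definition a_of (D : divisor) : adele_raw := fun p =>
  match D p with
  | Inf => ((fun _ => 0), 0)
  | Fin d => if (0 <= d)%R then (pk p `|d|%N, 0) else (zp_one p, `|d|%N)
  end.

Lemma vrat1 p : vrat p 1%R = 0%R.
Proof. by rewrite /vrat /= logn1. Qed.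

Lemma partF D : is_divisor D -> exists a, is_adele a /\ lin_equiv (Phi a) D.
Proof.
move=> [N hN]; exists (a_of D); split; first split.
- move=> p pp; rewrite /is_qp /a_of; case: (D p) => [d|].
    by case: ifP => _; zpa.
  by split=> n /=; [exact: pn_gt0 | exact: mod0n].
- exists N => p pp le; have := hN p pp le; rewrite /a_of.
  case: (D p) => [d|] /= hd.
    rewrite leNgt hd /=; exists (pk p `|d|%N); split; [zpa | by []].
  by exists (fun _ => 0); split; [split=> n /=; [exact: pn_gt0 | exact: mod0n] | ].
- exists 1%R; split => // p pp; rewrite vrat1 /Phi /a_of /vqp.
  case: (D p) => [d|] /=; last by rewrite vzp_inf.
  case: ifP => hd /=; first by rewrite vzp_pk //= addr0 oppr0 addr0 gez0_abs.
  rewrite vzp_one //=; congr Fin; rewrite ltz0_abs; [lia | by rewrite ltNge hd].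
Qed.

Definition sh p V (x : zp_raw) : zp_raw := fun n => x (n + V) %/ p ^ V.

Lemma sh_dvd p V x n : is_zp p x -> x V = 0 -> p ^ V %| x (n + V).
Proof. by move=> hx xV; rewrite -(zp_eq0_dvd _ _ _ _ hx) ?xV ?leq_addl. Qed.

Lemma sh_is p V x : prime p -> is_zp p x -> x V = 0 -> is_zp p (sh p V x).
Proof.
move=> pp hx xV; split=> n; rewrite /sh.
  rewrite ltn_divLR ?pn_gt0 // -expnD; by case: hx.
have d1 := sh_dvd p V x n.+1 hx xV.
have e : x (n + V) = x (n.+1 + V) %% p ^ (n + V) by rewrite (zp_mod _ _ _ _ hx) // addSn.
rewrite e expnD; set X := x (n.+1 + V) %/ p ^ V.
rewrite -[x (n.+1 + V)](divnK d1) -/X -muln_modl mulnK //.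
exact: pn_gt0.
Qed.

Lemma sh_mul p V x : prime p -> is_zp p x -> x V = 0 -> zp_mul p (pk p V) (sh p V x) = x.
Proof.
move=> pp hx xV; apply: functional_extensionality => n.
rewrite /zp_mul pkE // modnMml /sh mulnC divnK ?sh_dvd //.
by rewrite (zp_mod _ _ _ _ hx) // leq_addr.
Qed.

Lemma sh_unit p V x : prime p -> is_zp p x -> x V = 0 -> x V.+1 != 0 -> sh p V x 1 != 0.
Proof.
move=> pp hx xV xV1; rewrite /sh add1n; apply: contra xV1 => /eqP h.
by rewrite -(divnK (sh_dvd p V x 1 hx xV)) add1n h.
Qed.

Definition zinv p (y : zp_raw) : zp_raw := fun n => y n ^ (totient (p ^ n)).-1 %% p ^ n.

Lemma y_euler p y n : prime p -> is_zp p y -> y 1 != 0 ->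
  y n ^ totient (p ^ n) %% p ^ n = 1 %% p ^ n.
Proof.
move=> pp hy y1; case: n => [|n]; first by rewrite !expn0 !modn1.
apply: Euler_exp_totient.
rewrite coprime_pexpr // coprime_sym prime_coprime //.
by rewrite -[p in p %| _]expn1 -(zp_eq0_dvd _ _ _ _ hy).
Qed.

Lemma zinv_mul p y : prime p -> is_zp p y -> y 1 != 0 -> zp_mul p y (zinv p y) = zp_one p.
Proof.
move=> pp hy y1; apply: functional_extensionality => n.
rewrite /zp_mul /zinv zp_oneE // modnMmr -expnS prednK ?totient_gt0 ?pn_gt0 //.
exact: y_euler.
Qed.

Lemma tot_step p n : prime p ->
  (totient (p ^ n.+2)).-1 = (totient (p ^ n.+1)).-1 + totient (p ^ n.+1) * p.-1.
Proof.
move=> pp; rewrite !totient_pfactor //= expnS.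
have := pgt1 p pp; have := pn_gt0 p n pp.
case: p pp => // [[|p]] // pp; set P := _ ^ n => hP _ /=.
nia.
Qed.

Lemma zinv_is p y : prime p -> is_zp p y -> y 1 != 0 -> is_zp p (zinv p y).
Proof.
move=> pp hy y1; split=> n; rewrite /zinv.
  by rewrite ltn_pmod // pn_gt0.
rewrite modn_dvdm ?dvdn_exp2l // -modnXm (zp_mod _ _ _ _ hy) //.
case: n => [|n]; first by rewrite !expn0 !modn1.
rewrite tot_step // expnD expnM -modnMmr -modnXm y_euler // modnXm exp1n.
by rewrite modnMmr muln1.
Qed.

Lemma vzp_fin_inv p x (V : nat) : prime p -> is_zp p x -> vzp x = Fin V -> x V = 0 /\ x V.+1 != 0.
Proof.
move=> pp hx; case: (vzp_cases _ _ hx) => [x0|[k [xk xk1]]].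
  by rewrite vzp_inf.
by rewrite (vzp_fin p x k) // => -[] <-.
Qed.

Lemma zp_div p A B (V : nat) : prime p -> is_zp p A -> is_zp p B ->
  vzp A = Fin V -> vzp B = Fin V ->
  exists u w, [/\ is_zp p u, is_zp p w, zp_mul p u w = zp_one p & zp_mul p B u = A].
Proof.
move=> pp hA hB vA vB.
have [A0 A1] := vzp_fin_inv p A V pp hA vA.
have [B0 B1] := vzp_fin_inv p B V pp hB vB.
set A' := sh p V A; set B' := sh p V B.
have hA' : is_zp p A' by apply: sh_is.
have hB' : is_zp p B' by apply: sh_is.
have uA : A' 1 != 0 by apply: sh_unit.
have uB : B' 1 != 0 by apply: sh_unit.
exists (zp_mul p A' (zinv p B')), (zp_mul p B' (zinv p A')); split.
- by apply: zp_mul_is => //; apply: zinv_is.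
- by apply: zp_mul_is => //; apply: zinv_is.
- rewrite (zp_mulC p B') zp_mulACA (zp_mulC p (zinv p B')) !zinv_mul //.
  by rewrite zp_mul1 //; apply: zp_is_one.
- have eA := sh_mul p V A pp hA A0; have eB := sh_mul p V B pp hB B0.
  rewrite -[in RHS]eA -[X in zp_mul p X _]eB -/A' -/B'.
  by rewrite -zp_mulA (zp_mulCA p B') zinv_mul // zp_mul1.
Qed.

Lemma zp_mul0r p x y : (forall n, y n = 0) -> forall n, zp_mul p x y n = 0.
Proof. by move=> H n; rewrite zp_mulC; apply: zp_mul0l. Qed.

Lemma partE_local p (m n : int) x k y l : prime p -> m != 0%R -> n != 0%R ->
  is_zp p x -> is_zp p y ->
  zinf_add (vzp x) (Fin (- k%:Z)%R) =
    zinf_add (zinf_add (vzp y) (Fin (- l%:Z)%R))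
      (Fin (- ((logn p `|m|%N)%:Z - (logn p `|n|%N)%:Z))%R) ->
  exists u w, [/\ is_zp p u, is_zp p w, zp_mul p u w = zp_one p &
    zp_mul p (zp_mul p (zp_of_int p n) y) (pk p k) =
    zp_mul p (zp_mul p (zp_mul p (zp_of_int p m) x) u) (pk p l)].
Proof.
move=> pp m0 n0 hx hy hq.
have hone := zp_is_one p pp.
set A := zp_mul p (zp_mul p (zp_of_int p n) y) (pk p k).
set B := zp_mul p (zp_mul p (zp_of_int p m) x) (pk p l).
suff : exists u w, [/\ is_zp p u, is_zp p w, zp_mul p u w = zp_one p & zp_mul p B u = A].
  move=> [u [w [h1 h2 h3 h4]]]; exists u, w; split => //.
  by rewrite -h4 /B -!zp_mulA (zp_mulC p u).
have hA : is_zp p A by zpa.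
have hB : is_zp p B by zpa.
have vA : vzp A = zinf_add (zinf_add (Fin (logn p `|n|%N)) (vzp y)) (Fin k).
  by rewrite /A !vzp_mul ?vzp_pk ?vzp_of_int //; zpa.
have vB : vzp B = zinf_add (zinf_add (Fin (logn p `|m|%N)) (vzp x)) (Fin l).
  by rewrite /B !vzp_mul ?vzp_pk ?vzp_of_int //; zpa.
case: (vzp_nat x) hq vB => [-> | [X ->]]; case: (vzp_nat y) vA => [-> | [Y ->]] //= vA hq vB.
- exists (zp_one p), (zp_one p); split => //; first by rewrite zp_mul1.
  rewrite zp_mul1 //.
  apply: functional_extensionality => i.
  by rewrite (vzp_inf_inv p A) // (vzp_inf_inv p B).
- case: hq => hq.
  apply: (zp_div p A B (logn p `|n|%N + Y + k)) => //.
  rewrite vB; congr Fin; lia.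
Qed.

Lemma partE a b : is_adele a -> is_adele b -> lin_equiv (Phi a) (Phi b) -> adele_rel a b.
Proof.
move=> [ha _] [hb _] [q [q0 hq]].
have m0 : numq q != 0%R by rewrite numq_eq0.
have n0 : denq q != 0%R by rewrite denq_neq0.
have H : forall p, exists uw : zp_raw * zp_raw, prime p ->
   [/\ is_zp p uw.1, is_zp p uw.2, zp_mul p uw.1 uw.2 = zp_one p &
    qp_eq p (qp_mul p (adele_of_int (denq q) p) (b p))
      (qp_mul p (qp_mul p (adele_of_int (numq q) p) (a p)) (qp_of_zp uw.1))].
  move=> p; case: (boolP (prime p)) => pp; last by exists (zp_one p, zp_one p).
  have := partE_local p (numq q) (denq q) (a p).1 (a p).2 (b p).1 (b p).2 pp m0 n0
     (ha p pp) (hb p pp) (hq p pp).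
  move=> [u [w [h1 h2 h3 h4]]]; exists (u, w) => _; split => //.
  apply/qp_eqE => /=; rewrite addn0 !add0n; exact: h4.
pose f p := proj1_sig (constructive_indefinite_description _ (H p)).
have hf : forall p, prime p -> _ := fun p => proj2_sig (constructive_indefinite_description _ (H p)).
exists (numq q), (denq q), (fun p => (f p).1); split => //; split => //; split.
  split; first by move=> p pp; case: (hf p pp).
  exists (fun p => (f p).2); split; first by move=> p pp; case: (hf p pp).
  by move=> p pp n; case: (hf p pp) => _ _ -> _.
by move=> p pp; case: (hf p pp).
Qed.

Theorem proposition2p11 :
  (* multiplication of finite adeles descends to the double quotient *)
  (forall a b, is_adele a -> is_adele b -> is_adele (adele_mul a b)) /\
  (forall a a' b b', is_adele a -> is_adele a' -> is_adele b -> is_adele b' ->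
     adele_rel a a' -> adele_rel b b' ->
     adele_rel (adele_mul a b) (adele_mul a' b')) /\
  (* Phi lands in divisors and is well defined on classes *)
  (forall a, is_adele a -> is_divisor (Phi a)) /\
  (forall a b, is_adele a -> is_adele b -> adele_rel a b ->
     lin_equiv (Phi a) (Phi b)) /\
  (* injective on classes *)
  (forall a b, is_adele a -> is_adele b -> lin_equiv (Phi a) (Phi b) ->
     adele_rel a b) /\
  (* surjective onto Pic *)
  (forall D, is_divisor D -> exists a, is_adele a /\ lin_equiv (Phi a) D) /\
  (* monoid morphism *)
  divisor_eq (Phi adele_one) divisor_zero /\
  (forall a b, is_adele a -> is_adele b ->
     divisor_eq (Phi (adele_mul a b)) (divisor_add (Phi a) (Phi b))).
Proof.
split; first exact: partA.
split; first by move=> a a' b b' _ _ _ _; exact: partB.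
split; first exact: partC.
split; first exact: partD.
split; first exact: partE.
split; first exact: partF.
split; first exact: partG.
exact: partH.
Qed.
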